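(* Fix $n\ge1$. For $\theta>0$ let $K_n(\theta)$ be a random variable with $P\{K_n(\theta)=k\}=|S_n^k|\theta^k/\theta_{(n)}$ for $k=1,\dots,n$, where $\theta_{(n)}=\theta(\theta+1)\cdots(\theta+n-1)$ and $|S_n^k|$ is the coefficient of $\theta^k$ in $\theta_{(n)}$. Then, as $\theta\to\infty$, the family of laws of $K_n(\theta)$ satisfies an LDP on $\{1,\dots,n\}$ with speed $\log\theta$ and rate function $I(k)=n-k$.
   Context: $K_n(\theta)$ is the number of distinct alleles in a sample of size $n$ from a $PD(\theta)$ population. An LDP with speed $\log\theta$ uses normalization $(\log\theta)^{-1}\log$. *)

(* Defs.v *)
From HB Require Import structures.
From mathcomp Require Import all_boot all_order all_algebra.
From mathcomp Require Import all_classical all_reals all_analysis.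
Set Implicit Arguments. Unset Strict Implicit. Unset Printing Implicit Defensive.
Import Order.TTheory GRing.Theory Num.Theory.
Import numFieldNormedType.Exports.
Local Open Scope classical_set_scope.
Local Open Scope ring_scope.

Section Defs.
Variable R : realType.

Definition rising_poly (n : nat) : {poly R} := \prod_(i < n) ('X + (i%:R)%:P).

Definition stirling1 (n k : nat) : R := (rising_poly n)`_k.

Definition rising (theta : R) (n : nat) : R := \prod_(i < n) (theta + i%:R).

(* Law of K_n(theta) on {1,...,n}; the ordinal i : 'I_n encodes k = i+1. *)
Definition K_law (n : nat) (theta : R) (i : 'I_n) : R :=
  stirling1 n i.+1 * theta ^+ i.+1 / rising theta n.

Definition elog_rate (a p : R) : \bar R :=
  if 0 < p then (ln p / a)%:E else -oo%E.

(* Large deviation principle, as theta -> +oo, for a family of laws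
   mu theta on a finite set T with the discrete topology (every set is open
   and closed), with speed a and rate function I. *)
Definition LDP_finite (T : finType) (mu : R -> T -> R) (a : R -> R)
    (I : T -> \bar R) : Prop :=
  (forall t, (0 <= I t)%E) /\
  forall A : {set T},
    (limf_esup (fun theta => elog_rate (a theta) (\sum_(t in A) mu theta t))
       (pinfty_nbhs R) <= - ereal_inf [set I t | t in [set t | t \in A]])%E
    /\
    (- ereal_inf [set I t | t in [set t | t \in A]] <=
       limf_einf (fun theta => elog_rate (a theta) (\sum_(t in A) mu theta t))
       (pinfty_nbhs R))%E.

End Defs.

(* Main.v *)
Require Import Defs.
From HB Require Import structures.
From mathcomp Require Import all_boot all_order all_algebra.
From mathcomp Require Import all_classical all_reals all_analysis.
From mathcomp Require Import lra.
Import Order.TTheory GRing.Theory Num.Theory.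
Import numFieldNormedType.Exports.
Local Open Scope classical_set_scope.
Local Open Scope ring_scope.

Section S.
Variable R : realType.

Lemma esup_le (f : R -> \bar R) (x : \bar R) :
  (forall e : R, 0 < e -> pinfty_nbhs R [set t | (f t <= x + e%:E)%E]) ->
  (limf_esup f (pinfty_nbhs R) <= x)%E.
Proof.
move=> H; apply/lee_addgt0Pr => e e0; rewrite /limf_esup.
apply: ge_ereal_inf; exists (ereal_sup (f @` [set t | (f t <= x + e%:E)%E])).
  by exists [set t | (f t <= x + e%:E)%E] => //; exact: H.
by apply: ge_ereal_sup => _ [t Vt <-].
Qed.

Lemma einf_ge (f : R -> \bar R) (x : \bar R) :
  (forall e : R, 0 < e -> pinfty_nbhs R [set t | (x - e%:E <= f t)%E]) ->
  (x <= limf_einf f (pinfty_nbhs R))%E.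
Proof.
move=> H; apply/lee_subgt0Pr => e e0; rewrite limf_einfE.
apply: le_ereal_sup_tmp; exists (ereal_inf (f @` [set t | (x - e%:E <= f t)%E])).
  by exists [set t | (x - e%:E <= f t)%E] => //; exact: H.
by apply: le_ereal_inf_tmp => _ [t Vt <-].
Qed.

Lemma stirling_pos (n : nat) :
  (forall k, 0 <= (rising_poly R n)`_k) /\
  (forall k, (k <= n)%N -> (0 < k)%N || (n == 0)%N -> 0 < (rising_poly R n)`_k).
Proof.
elim: n => [|n [IH1 IH2]].
  rewrite /rising_poly big_ord0; split=> k; rewrite coefC.
    by case: (k == 0)%N.
  by rewrite leqn0 => /eqP -> _.
have E : forall k, (rising_poly R n.+1)`_k =
   (if k == 0%N then 0 else (rising_poly R n)`_k.-1) + (rising_poly R n)`_k * n%:R.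
  move=> k; rewrite /rising_poly big_ord_recr /= -/(rising_poly R n).
  by rewrite mulrDr coefD coefMX coefMC.
split=> k.
  rewrite E; apply: addr_ge0; last by rewrite mulr_ge0 // IH1.
  by case: (k == 0)%N => //.
move=> kn /orP [k0|//]; rewrite E.
case: k kn k0 => // k kn _ /=.
case: k kn => [|k] kn.
  case: n IH1 IH2 {E kn} => [|n] IH1 IH2.
    rewrite mulr0 addr0 /=; exact: IH2.
  by apply: ltr_pwDr; rewrite ?IH1 // mulr_gt0 // IH2.
by apply: ltr_pwDl; rewrite ?mulr_ge0 ?IH1 // IH2.
Qed.

Lemma conv_lemma (g : R -> R) (L a b : R) :
  (forall t, 1 < t -> L * ln t - a <= g t <= L * ln t + b) ->
  forall e, 0 < e -> exists M : R, forall t, M < t ->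
     1 < t /\ L - e <= g t / ln t <= L + e.
Proof.
move=> H e e0; set K := (`|a| + `|b|) / e.
have K0 : 0 <= K by rewrite divr_ge0 // ?addr_ge0 // ltW.
exists (expR K) => t Mt.
have t1 : 1 < t.
  by apply: le_lt_trans Mt; apply: le_trans (expR_ge1Dx K); rewrite lerDl.
have t0 : 0 < t by apply: lt_trans t1.
have lnt : K < ln t.
  by rewrite -(expRK K) ltr_ln // posrE expR_gt0.
have lnt0 : 0 < ln t by apply: le_lt_trans lnt.
have eK : e * K = `|a| + `|b| by rewrite /K mulrC divfK // gt_eqF.
have HK : `|a| + `|b| < e * ln t by rewrite -eK ltr_pM2l.
have ha := ler_norm a; have hb := ler_norm b.
have hna : - a <= `|a| by rewrite -normrN ler_norm.
have nb := normr_ge0 b; have na := normr_ge0 a.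
split => //; case/andP: (H t t1) => H1 H2.
apply/andP; split.
  by rewrite ler_pdivlMr // mulrBl; lra.
by rewrite ler_pdivrMr // mulrDl; lra.
Qed.

Lemma rising_lb (t : R) (n : nat) : 1 <= t -> t ^+ n <= rising t n.
Proof.
move=> t1; rewrite /rising -[in t ^+ n](card_ord n) -prodr_const; apply: ler_prod => i _.
by rewrite (le_trans _ t1) //= lerDl.
Qed.

Lemma rising_ub (t : R) (n : nat) : 1 <= t ->
  rising t n <= t ^+ n * \prod_(i < n) (i.+1)%:R.
Proof.
move=> t1; rewrite /rising -[in t ^+ n](card_ord n) -prodr_const -big_split /=; apply: ler_prod => i _.
have t0 : 0 <= t by apply: le_trans t1.
rewrite addr_ge0 //= -addn1 natrD mulrDr mulr1 addrC.
by rewrite lerD2r -[X in X <= _]mul1r ler_wpM2r.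
Qed.

Lemma log_bounds (n : nat) (A : {set 'I_n}) (i0 : 'I_n) :
  i0 \in A -> (forall i, i \in A -> (i <= i0)%N) ->
  exists a b : R, forall t, 1 < t ->
    0 < \sum_(i in A) @K_law R n t i /\
    ((i0.+1)%:R - n%:R) * ln t - a <= ln (\sum_(i in A) @K_law R n t i)
       <= ((i0.+1)%:R - n%:R) * ln t + b.
Proof.
move=> Ai0 Hmax.
have [sg0 sgt0] := stirling_pos n.
set s := fun i : 'I_n => stirling1 R n i.+1.
have s0 : forall i, 0 <= s i by move=> i; exact: sg0.
have c0 : 0 < s i0 by apply: sgt0 => //; exact: ltn_ord.
set D := \sum_(i in A) s i.
have cD : s i0 <= D by rewrite /D (bigD1 i0) //= lerDl sumr_ge0.
have D0 : 0 < D by apply: lt_le_trans cD.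
set C := \prod_(i < n) ((i.+1)%:R : R).
have C0 : 0 < C by apply: prodr_gt0 => i _; rewrite ltr0n.
exists (ln C - ln (s i0)), (ln D) => t t1.
have t0 : 0 < t by apply: lt_trans t1.
have t1' : 1 <= t by exact: ltW.
set N := \sum_(i in A) s i * t ^+ i.+1.
have SE : \sum_(i in A) @K_law R n t i = N / rising t n.
  by rewrite /N mulr_suml; apply: eq_bigr => i _.
have Nlb : s i0 * t ^+ i0.+1 <= N.
  by rewrite /N (bigD1 i0) //= lerDl sumr_ge0 // => i _; rewrite mulr_ge0 // exprn_ge0 // ltW.
have Nub : N <= D * t ^+ i0.+1.
  rewrite /N /D mulr_suml; apply: ler_sum => i Ai.
  by rewrite ler_wpM2l // ler_weXn2l // ltnS Hmax.
have tn0 : 0 < t ^+ n by rewrite exprn_gt0.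
have rlb := rising_lb t n t1'.
have rub := rising_ub t n t1'.
have r0 : 0 < rising t n by apply: lt_le_trans rlb.
have N0 : 0 < N by apply: lt_le_trans Nlb; rewrite mulr_gt0 // exprn_gt0.
have tm0 : 0 < t ^+ i0.+1 by rewrite exprn_gt0.
split; first by rewrite SE divr_gt0.
rewrite SE ln_div ?posrE //.
have h1 : ln (s i0) + (i0.+1)%:R * ln t <= ln N.
  by rewrite mulr_natl -lnXn // -lnM ?posrE ?mulr_gt0 // ler_ln ?posrE ?mulr_gt0.
have h2 : ln N <= ln D + (i0.+1)%:R * ln t.
  by rewrite mulr_natl -lnXn // -lnM ?posrE ?mulr_gt0 // ler_ln ?posrE ?mulr_gt0.
have h3 : n%:R * ln t <= ln (rising t n).
  by rewrite mulr_natl -lnXn // ler_ln ?posrE.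
have h4 : ln (rising t n) <= n%:R * ln t + ln C.
  by rewrite mulr_natl -lnXn // -lnM ?posrE ?mulr_gt0 // ler_ln ?posrE ?mulr_gt0.
rewrite mulrBl; apply/andP; split; lra.
Qed.
End S.

Theorem theorem4p2 (R : realType) (n : nat) (hn : (1 <= n)%N) :
  LDP_finite (@K_law R n) (@ln R) (fun i : 'I_n => ((n - i.+1)%N)%:R%:E).
Proof.
split; first by move=> i; rewrite lee_fin ler0n.
move=> A.
case: (set_0Vmem A) => [-> | [i Ai]].
  have E : ereal_inf [set (((n - i.+1)%N)%:R : R)%:E | i in [set t | t \in (finset.set0 : {set 'I_n})]]
     = +oo%E.
    apply: (proj2 (ereal_inf_pinfty _)) => x [j]; by rewrite /= inE.
  rewrite E /=; split; last exact: leNye.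
  apply: esup_le => e e0; exists 0; split; first exact: num_real.
  by move=> x _ /=; rewrite big_set0 /elog_rate ltxx.
case: (arg_maxnP (fun j : 'I_n => (j : nat)) Ai) => i0 Ai0 Hmax.
have i0n : (i0.+1 <= n)%N := ltn_ord i0.
have E : ereal_inf [set (((n - i.+1)%N)%:R : R)%:E | i in [set t | t \in A]]
     = (((n - i0.+1)%N)%:R : R)%:E.
  apply/le_anti/andP; split.
    by apply: ereal_inf_lbound; exists i0.
  apply: le_ereal_inf_tmp => _ [j /= Aj <-].
  by rewrite lee_fin ler_nat leq_sub2l // ltnS; exact: Hmax.
rewrite E -EFinN natrB // opprB.
have [a [b Hab]] := @log_bounds R n A i0 Ai0 Hmax.
have Hc := @conv_lemma R (fun t => ln (\sum_(i in A) @K_law R n t i))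
   ((i0.+1)%:R - n%:R) a b (fun t t1 => (Hab t t1).2).
split.
  apply: esup_le => e e0; have [M HM] := Hc e e0.
  exists M; split; first exact: num_real.
  move=> t /HM [t1 /andP [_ h]] /=.
  by rewrite /elog_rate (Hab t t1).1 -EFinD lee_fin.
apply: einf_ge => e e0; have [M HM] := Hc e e0.
exists M; split; first exact: num_real.
move=> t /HM [t1 /andP [h _]] /=.
by rewrite /elog_rate (Hab t t1).1 -EFinB lee_fin.
Qed.
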